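(* Let $\mathbf w\in\mathbb R^m$. (a) If $|\lambda|=2$, then $B_{\mathbf w}$ satisfies the strong majority criterion if and only if $\mathbf w(1)>\mathbf w(2)$. (b) If $|\lambda|>2$, then no nontrivial positional voting method $B_{\mathbf w}$ satisfies the strong majority criterion.
   Context: Fix an integer $n\ge 2$ and a set $\mathbf C$ of $n$ candidates. Fix a composition $\lambda=(\lambda_1,\dots,\lambda_m)$ of $n$ (positive integers with $\sum_i\lambda_i=n$), write $|\lambda|=m$ and $[m]=\{1,\dots,m\}$. A ballot is a function $b:\mathbf C\to[m]$ with $|b^{-1}(i)|=\lambda_i$ for every $i$; $\mathbf C_\lambda$ denotes the set of ballots. The profile space is $P=\mathbb R^{\mathbf C_\lambda}$ with basis $\{\delta_b\}$ (indicator functions) and inner product $\mathbf p\cdot\mathbf q=\sum_b\mathbf p(b)\mathbf q(b)$. For candidates $X,Y$: $\mathbf a_{X>Y}=\sum_{b:\,b(X)<b(Y)}\delta_b$ and $\mathbf r_{X>Y}=\mathbf a_{X>Y}-\mathbf a_{Y>X}$; by convention, $X$ defeats $Y$ in a head-to-head race in $\mathbf p$ iff $\mathbf p\cdot\mathbf r_{X>Y}>0$. For $\mathbf w\in\mathbb R^m$ (a function $[m]\to\mathbb R$) and $X\in\mathbf C$, $\mathbf v_X\in P$ is $\mathbf v_X(b)=\mathbf w(b(X))$; the positional voting method $B_{\mathbf w}:P\to\mathbb R^{\mathbf C}$ is $B_{\mathbf w}(\mathbf p)(X)=\mathbf p\cdot\mathbf v_X$. A map $F:P\to\mathbb R^{\mathbf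 C}$ is trivial if $F(\mathbf p)$ is a constant function on $\mathbf C$ for every $\mathbf p$, and nontrivial otherwise. $F$ satisfies the strong majority criterion if for every ordered pair of distinct candidates $X,Y$ and every $\mathbf p\in P$ with $\mathbf p\cdot\mathbf r_{X>Y}>0$, we have $F(\mathbf p)(X)>F(\mathbf p)(Y)$. *)

(* Defs.v *)
From HB Require Import structures.
From mathcomp Require Import all_boot all_order all_algebra.
Import Order.TTheory GRing.Theory Num.Theory.
Local Open Scope ring_scope.

(* Positions [m] = {1,...,m} are represented by 'I_m = {0,...,m-1}
   (position i+1 of the paper is the ordinal i; so position 1 = ord0). *)

Definition is_ballot (C : finType) {m : nat} (lam : 'I_m -> nat)
  (b : {ffun C -> 'I_m}) : bool :=
  [forall i : 'I_m, #|[set x | b x == i]| == lam i].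

Definition ballot (C : finType) {m : nat} (lam : 'I_m -> nat) :=
  {b : {ffun C -> 'I_m} | is_ballot C lam b}.
HB.instance Definition _ C m lam := Finite.on (@ballot C m lam).

Definition profile (R : realFieldType) (C : finType) {m : nat} (lam : 'I_m -> nat) :=
  ballot C lam -> R.

Definition pdot {R : realFieldType} {C : finType} {m : nat} {lam : 'I_m -> nat}
  (p q : profile R C lam) : R := \sum_(b : ballot C lam) p b * q b.

Definition a_vec (R : realFieldType) {C : finType} {m : nat} (lam : 'I_m -> nat)
  (X Y : C) : profile R C lam :=
  fun b => if (val b X < val b Y)%N then 1 else 0.

Definition r_vec (R : realFieldType) {C : finType} {m : nat} (lam : 'I_m -> nat)
  (X Y : C) : profile R C lam :=
  fun b => a_vec R lam X Y b - a_vec R lam Y X b.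

Definition v_vec {R : realFieldType} (C : finType) {m : nat} (lam : 'I_m -> nat)
  (w : 'I_m -> R) (X : C) : profile R C lam :=
  fun b => w (val b X).

Definition positional {R : realFieldType} (C : finType) {m : nat} (lam : 'I_m -> nat)
  (w : 'I_m -> R) (p : profile R C lam) : C -> R :=
  fun X => pdot p (v_vec C lam w X).

Definition trivial_method {R : realFieldType} {C : finType} {m : nat} {lam : 'I_m -> nat}
  (F : profile R C lam -> C -> R) : Prop :=
  forall p : profile R C lam, forall X Y : C, F p X = F p Y.

Definition strong_majority {R : realFieldType} {C : finType} {m : nat} {lam : 'I_m -> nat}
  (F : profile R C lam -> C -> R) : Prop :=
  forall X Y : C, X != Y -> forall p : profile R C lam,
    0 < pdot p (r_vec R lam X Y) -> F p Y < F p X.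

Definition composition (C : finType) {m : nat} (lam : 'I_m -> nat) : Prop :=
  (forall i, (0 < lam i)%N) /\ (\sum_(i < m) lam i)%N = #|C|.

(* Main.v *)
Require Import Defs.
From HB Require Import structures.
From mathcomp Require Import all_boot all_order all_algebra all_fingroup.
From mathcomp Require Import ring.
Import Order.TTheory GRing.Theory Num.Theory.

Lemma count_nth_sum (T : eqType) (x0 : T) (s : seq T) (a : pred T) :
  count a s = \sum_(k < size s) a (nth x0 s k).
Proof.
rewrite -{1}(mkseq_nth x0 s) /mkseq count_map -sum1_count big_mkcond /=.
rewrite -(big_mkord xpredT (fun k => a (nth x0 s k) : nat)) /index_iota subn0.
by apply: eq_bigr => k _; case: (a _).
Qed.

Lemma card_sum (T : finType) (P : pred T) : #|[set x | P x]| = \sum_(x : T) (P x : nat).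
Proof.
rewrite -sum1_card big_mkcond /=; apply: eq_bigr => x _; rewrite inE; by case: (P x).
Qed.

Lemma ballot_exists (C : finType) m (lam : 'I_m -> nat) (i0 : 'I_m) :
  composition C lam -> exists b : {ffun C -> 'I_m}, is_ballot C lam b.
Proof.
case=> _ hsum.
pose s := flatten [seq nseq (lam i) i | i <- enum 'I_m].
have hcnt : forall i, count (pred1 i) s = lam i.
  move=> i; rewrite count_flatten -map_comp sumnE big_map.
  rewrite (eq_bigr (fun j => ((j == i) * lam j)%N)); last first.
    by move=> j _ /=; rewrite count_nseq /= eq_sym.
  rewrite big_enum /= (bigD1 i) //= eqxx mul1n big1 ?addn0 //.
  by move=> j /negbTE ->.
have hsz : size s = #|C|.
  rewrite size_flatten /shape -map_comp sumnE big_map -hsum big_enum /=.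
  by apply: eq_bigr => j _ /=; rewrite size_nseq.
exists [ffun x => nth i0 s (enum_rank x)].
apply/forallP => i; apply/eqP.
rewrite card_sum -hcnt (count_nth_sum _ i0) hsz.
rewrite [LHS](reindex (fun k : 'I_#|C| => enum_val k)) /=; last first.
  by exists (@enum_rank C) => x _; rewrite ?enum_valK ?enum_rankK.
by apply: eq_bigr => k _; rewrite ffunE enum_valK.
Qed.

Lemma ballot_perm (C : finType) m (lam : 'I_m -> nat) (b : {ffun C -> 'I_m}) (s : {perm C}) :
  is_ballot C lam b -> is_ballot C lam [ffun x => b (s x)].
Proof.
move=> /forallP hb; apply/forallP => i.
have -> : [set x | [ffun x => b (s x)] x == i] = s @^-1: [set x | b x == i].
  by apply/setP => x; rewrite !inE ffunE.
rewrite card_preimset; [exact: hb | exact: perm_inj].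
Qed.

Lemma fiber_nonempty (C : finType) m (lam : 'I_m -> nat) (b : {ffun C -> 'I_m}) (i : 'I_m) :
  composition C lam -> is_ballot C lam b -> exists x, b x = i.
Proof.
case=> hpos _ /forallP /(_ i) /eqP hb.
have : (0 < #|[set x | b x == i]|)%N by rewrite hb.
by case/card_gt0P => x; rewrite inE => /eqP; exists x.
Qed.

Lemma ballot_at (C : finType) m (lam : 'I_m -> nat) (X Y : C) (i j : 'I_m) :
  composition C lam -> X != Y -> i != j ->
  exists b : ballot C lam, val b X = i /\ val b Y = j.
Proof.
move=> hc XY ij.
have [b0 hb0] := ballot_exists C m lam i hc.
have [X' hX'] := fiber_nonempty _ _ _ _ i hc hb0.
pose b1 := [ffun x => b0 (tperm X X' x)].
have hb1 : is_ballot C lam b1 by exact: ballot_perm.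
have b1X : b1 X = i by rewrite ffunE tpermL.
have [Z hZ] := fiber_nonempty _ _ _ _ j hc hb1.
have XZ : X != Z by apply/eqP => E; move: ij; rewrite -b1X -hZ E eqxx.
pose b2 := [ffun x => b1 (tperm Y Z x)].
have hb2 : is_ballot C lam b2 by exact: ballot_perm.
exists (exist _ b2 hb2) => /=; split.
  by rewrite ffunE tpermD // eq_sym.
by rewrite ffunE tpermL.
Qed.

Local Open Scope ring_scope.

Definition comb (R : realFieldType) (C : finType) m (lam : 'I_m -> nat) (a c : R)
  (b1 b2 : ballot C lam) : profile R C lam :=
  fun b => a * (b == b1)%:R + c * (b == b2)%:R.
Arguments comb {R C m lam}.

Lemma pdot_comb (R : realFieldType) (C : finType) m (lam : 'I_m -> nat) (a c : R)
  (b1 b2 : ballot C lam) (q : profile R C lam) :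
  pdot (comb a c b1 b2) q = a * q b1 + c * q b2.
Proof.
rewrite /pdot /comb.
under eq_bigr do rewrite mulrDl.
rewrite big_split /= (bigD1 b1) //= eqxx big1 ?addr0; last first.
  by move=> b /negbTE ->; rewrite mulr0 mul0r.
rewrite (bigD1 b2) //= eqxx big1 ?addr0; last first.
  by move=> b /negbTE ->; rewrite mulr0 mul0r.
by rewrite !mulr1.
Qed.

Lemma pos_diff (R : realFieldType) (C : finType) m (lam : 'I_m -> nat) (w : 'I_m -> R)
  (p : profile R C lam) X Y :
  positional C lam w p X - positional C lam w p Y =
  \sum_b p b * (w (val b X) - w (val b Y)).
Proof.
rewrite /positional /pdot -sumrB; apply: eq_bigr => b _; by rewrite mulrBr.
Qed.

Lemma const_diff (R : realFieldType) (C : finType) m (lam : 'I_m -> nat) (w : 'I_m -> R) X Y :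
  strong_majority (positional C lam w) -> X != Y ->
  forall b1 b2 : ballot C lam, (val b1 X < val b1 Y)%N -> (val b2 X < val b2 Y)%N ->
  w (val b1 X) - w (val b1 Y) = w (val b2 X) - w (val b2 Y).
Proof.
move=> sm XY b1 b2 h1 h2.
set d1 := _ - _; set d2 := _ - _.
case: (eqVneq d1 d2) => // hne.
have hne' : d2 - d1 != 0 by rewrite subr_eq0 eq_sym.
pose k := d1 / (d2 - d1).
have := sm X Y XY (comb (k + 1) (- k) b1 b2).
have hr : forall b : ballot C lam, (val b X < val b Y)%N -> r_vec R lam X Y b = 1.
  move=> b hb; rewrite /r_vec /a_vec hb.
  by rewrite ltnNge (ltnW hb) /= subr0.
rewrite pdot_comb !hr // !mulr1.
have -> : k + 1 + - k = 1 by rewrite addrAC subrr add0r.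
move=> /(_ ltr01).
idtac.
rewrite -subr_gt0 pos_diff.
have -> : \sum_b comb (k + 1) (- k) b1 b2 b * (w (val b X) - w (val b Y)) =
   pdot (comb (k + 1) (- k) b1 b2) (fun b => w (val b X) - w (val b Y)) by [].
rewrite pdot_comb -/d1 -/d2.
have -> : (k + 1) * d1 + - k * d2 = 0.
  rewrite /k; field; exact: hne'.
by rewrite ltxx.
Qed.

Lemma two_distinct (C : finType) : (2 <= #|C|)%N -> exists X Y : C, X != Y.
Proof.
move=> hC.
have /card_gt0P [X _] : (0 < #|C|)%N by apply: leq_trans hC.
have /card_gt0P [Y HY] : (0 < #|predC1 X|)%N by rewrite cardC1 -ltnS prednK //; apply: leq_trans hC.
by exists Y, X; rewrite inE in HY.
Qed.

Lemma ord2_cases (x : 'I_2) : x = ord0 \/ x = ord_max.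
Proof.
case: x => [[|[|k]] hk]; [left|right|by []]; exact: val_inj.
Qed.

Theorem mainTheorem10 (R : realFieldType) (C : finType) (hC : (2 <= #|C|)%N) :
  (forall (lam : 'I_2 -> nat) (w : 'I_2 -> R),
     composition C lam ->
     (strong_majority (positional C lam w) <-> w ord_max < w ord0))
  /\
  (forall (m : nat) (lam : 'I_m -> nat) (w : 'I_m -> R),
     (2 < m)%N -> composition C lam ->
     ~ (~ trivial_method (positional C lam w) /\
        strong_majority (positional C lam w))).
Proof.
have [X [Y XY]] := two_distinct C hC.
split.
  move=> lam w hc; split.
    move=> sm.
    have [b [bX bY]] := ballot_at C 2 lam X Y ord0 ord_max hc XY isT.
    have := sm X Y XY (comb 1 0 b b).
    rewrite /positional !pdot_comb /v_vec /r_vec /a_vec bX bY /=.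
    by rewrite !mul0r !addr0 !mul1r subr0 => /(_ ltr01).
  move=> hw X' Y' XY' p hp; rewrite -subr_gt0 pos_diff.
  have -> : \sum_b p b * (w (val b X') - w (val b Y')) =
    (w ord0 - w ord_max) * pdot p (r_vec R lam X' Y').
    rewrite /pdot mulr_sumr; apply: eq_bigr => b _.
    rewrite mulrCA; congr (_ * _).
    rewrite /r_vec /a_vec.
    case: (ord2_cases (val b X')) => ->; case: (ord2_cases (val b Y')) => -> /=;
      rewrite ?subrr ?mulr0 ?subr0 ?mulr1 ?sub0r ?mulrN1 ?opprB //.
  by apply: mulr_gt0 => //; rewrite subr_gt0.
move=> m lam w hm hc [ntriv sm]; apply: ntriv.
have hm1 : (1 < m)%N by apply: ltnW.
have hm0 : (0 < m)%N by apply: ltnW.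
pose o0 := Ordinal hm0; pose o1 := Ordinal hm1; pose o2 := Ordinal hm.
have Hd : forall i j : 'I_m, (i < j)%N -> exists b : ballot C lam, val b X = i /\ val b Y = j.
  move=> i j ij; apply: ballot_at => //; by rewrite neq_ltn ij.
have Hw : forall i j i' j' : 'I_m, (i < j)%N -> (i' < j')%N -> w i - w j = w i' - w j'.
  move=> i j i' j' ij ij'.
  have [b [bX bY]] := Hd i j ij; have [b' [bX' bY']] := Hd i' j' ij'.
  rewrite -bX -bY -bX' -bY'; apply: const_diff => //.
    by rewrite bX bY.
  by rewrite bX' bY'.
have wj1 : forall j : 'I_m, (0 < j)%N -> w j = w o1.
  move=> j hj; have := Hw o0 j o0 o1 hj isT.
  by move=> h; apply: oppr_inj; exact: (addrI _ h).
have w01 : w o0 = w o1.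
  have := Hw o1 o2 o0 o1 isT isT; rewrite (wj1 o2 isT) subrr.
  by move/eqP; rewrite eq_sym subr_eq0 => /eqP.
have wc : forall j, w j = w o0.
  move=> j; case: (posnP j) => hj.
    by congr w; apply: val_inj.
  by rewrite wj1 // w01.
move=> p X1 Y1; rewrite /positional /pdot.
by apply: eq_bigr => b _; rewrite /v_vec !wc.
Qed.
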